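(* Let $f,g$ satisfy the standing assumptions below. Suppose $\beta\ge\frac{4Q_gM_f}{\mu^3}$ and $\hat\beta\ge\beta\max\{\frac{8L_g^2}{\mu},\frac1{4\mu},\frac\mu4\}$. Then for any $(x,y)\in\mathbb{R}^n\times\mathbb{R}^p$ and any $w\in\hat{\mathcal{D}}_s(x,y)$, $\sup_{z\in\mathcal{D}_h(x,y)}\langle w,z\rangle\ge\min\{\frac14,\frac{\beta^2}{16\hat\beta^2}\}\|w\|^2$.
   Context: Standing assumptions. (A1) Constants $M_f,\mu,L_g,Q_g>0$ exist such that: $f:\mathbb{R}^n\times\mathbb{R}^p\to\mathbb{R}$ is $M_f$-Lipschitz; $g$ is twice differentiable with $\nabla^2_{yy}g\succeq\mu I_p$; $\nabla g$ is $L_g$-Lipschitz; $\nabla^2_{yy}g,\nabla^2_{xy}g$ are $Q_g$-Lipschitz; $\nabla^2_{yy}g$ is continuously differentiable ($\nabla^2_{xy}g\in\mathbb{R}^{n\times p}$ has entries $\partial^2g/\partial x_i\partial y_j$). (A2) $f$ is a potential function of a conservative field $\mathcal{D}_f$ with compact convex values of norm at most $M_f$. Notation (all at $(x,y)$): $H=\nabla^2_{yy}g$; $\mathcal{A}(x,y):=y-H^{-1}\nabla_yg$; $\nabla^3_{xyy}g(x,y)[d]:=\lim_{t\to0}\frac1t(\nabla^2_{xy}g(x,y+td)-\nabla^2_{xy}g(x,y))$, $\nabla^3_{yyy}g(x,y)[d]:=\lim_{t\to0}\frac1t(\nabla^2_{yy}g(x,y+td)-\nabla^2_{yy}g(x,y))$;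 $J_{A,x}:=-\nabla^2_{xy}gH^{-1}+\nabla^3_{xyy}g[H^{-1}\nabla_yg]H^{-1}$, $J_{A,y}:=\nabla^3_{yyy}g[H^{-1}\nabla_yg]H^{-1}$; $\mathcal{D}_h(x,y):=\{(d_x+J_{A,x}d_y+\beta\nabla^2_{xy}g\nabla_yg,\ J_{A,y}d_y+\beta H\nabla_yg):(d_x,d_y)\in\mathcal{D}_f(x,\mathcal{A}(x,y))\}$; $\hat{\mathcal{D}}_s(x,y):=\{(d_x-\nabla^2_{xy}gH^{-1}d_y,\ \hat\beta\nabla_yg):(d_x,d_y)\in\mathcal{D}_f(x,\mathcal{A}(x,y))\}$. *)

(* Defs.v *)
From mathcomp Require Import all_boot all_order all_algebra.
From mathcomp Require Import all_classical all_reals all_analysis.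
Import Order.TTheory GRing.Theory Num.Theory.
Import numFieldNormedType.Exports.

Set Implicit Arguments.
Unset Strict Implicit.
Unset Printing Implicit Defensive.

Local Open Scope ring_scope.
Local Open Scope classical_set_scope.

Section Defs.
Variables (R : realType) (n p : nat).

Notation E := ('cV[R]_n * 'cV[R]_p)%type.

Definition dotv (m : nat) (u v : 'cV[R]_m) : R := \sum_(i < m) u i 0 * v i 0.
Definition enorm (m : nat) (u : 'cV[R]_m) : R := Num.sqrt (dotv u u).

Definition dotp (w z : E) : R := dotv w.1 z.1 + dotv w.2 z.2.
Definition enormp (w : E) : R := Num.sqrt (dotp w w).

Definition opnorm (m k : nat) (A : 'M[R]_(m, k)) : R :=
  sup [set enorm (A *m v) | v in [set v : 'cV[R]_k | enorm v <= 1]].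

Definition gradx (g : E -> R) (z : E) : 'cV[R]_n :=
  \col_(i < n) 'D_((delta_mx i 0 : 'cV[R]_n), (0 : 'cV[R]_p)) g z.
Definition grady (g : E -> R) (z : E) : 'cV[R]_p :=
  \col_(j < p) 'D_((0 : 'cV[R]_n), (delta_mx j 0 : 'cV[R]_p)) g z.
Definition grad (g : E -> R) (z : E) : E := (gradx g z, grady g z).

Definition hessyy (g : E -> R) (z : E) : 'M[R]_p :=
  \matrix_(i < p, j < p)
    'D_((0 : 'cV[R]_n), (delta_mx j 0 : 'cV[R]_p)) (fun z' => grady g z' i 0) z.
Definition hessxy (g : E -> R) (z : E) : 'M[R]_(n, p) :=
  \matrix_(i < n, j < p)
    'D_((delta_mx i 0 : 'cV[R]_n), (0 : 'cV[R]_p)) (fun z' => grady g z' j 0) z.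

Definition d3xyy (g : E -> R) (z : E) (d : 'cV[R]_p) : 'M[R]_(n, p) :=
  'D_((0 : 'cV[R]_n), d) (hessxy g) z.
Definition d3yyy (g : E -> R) (z : E) (d : 'cV[R]_p) : 'M[R]_p :=
  'D_((0 : 'cV[R]_n), d) (hessyy g) z.

Definition Amap (g : E -> R) (x : 'cV[R]_n) (y : 'cV[R]_p) : 'cV[R]_p :=
  y - invmx (hessyy g (x, y)) *m grady g (x, y).

Definition JAx (g : E -> R) (x : 'cV[R]_n) (y : 'cV[R]_p) : 'M[R]_(n, p) :=
  let z := (x, y) in
  let Hi := invmx (hessyy g z) in
  - (hessxy g z *m Hi) + d3xyy g z (Hi *m grady g z) *m Hi.

Definition JAy (g : E -> R) (x : 'cV[R]_n) (y : 'cV[R]_p) : 'M[R]_p :=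
  let z := (x, y) in
  let Hi := invmx (hessyy g z) in
  d3yyy g z (Hi *m grady g z) *m Hi.

Definition Dh (g : E -> R) (Df : E -> set E) (beta : R)
    (x : 'cV[R]_n) (y : 'cV[R]_p) : set E :=
  [set (d.1 + JAx g x y *m d.2 + beta *: (hessxy g (x, y) *m grady g (x, y)),
        JAy g x y *m d.2 + beta *: (hessyy g (x, y) *m grady g (x, y)))
   | d in Df (x, Amap g x y)].

Definition Dshat (g : E -> R) (Df : E -> set E) (betahat : R)
    (x : 'cV[R]_n) (y : 'cV[R]_p) : set E :=
  [set (d.1 - hessxy g (x, y) *m invmx (hessyy g (x, y)) *m d.2,
        betahat *: grady g (x, y))
   | d in Df (x, Amap g x y)].

Definition abs_cont_curve (gam : R -> E) : Prop :=
  forall eps : R, 0 < eps -> exists2 delta : R, 0 < delta &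
    forall (N : nat) (a b : nat -> R),
      (forall k, (k < N)%N -> 0 <= a k <= b k /\ b k <= 1) ->
      (forall k l, (k < l)%N -> (l < N)%N -> b k <= a l) ->
      \sum_(k < N) (b k - a k) < delta ->
      \sum_(k < N) enormp (gam (b k) - gam (a k)) < eps.

(* D is a conservative field (nonempty compact values, closed graph) and f is
   a potential of D: along every absolutely continuous curve, for almost
   every t, d/dt f(gam t) = <v, gam'(t)> for all v in D(gam t). *)
Definition conservative_potential (D : E -> set E) (f : E -> R) : Prop :=
  (forall z, D z !=set0) /\
  (forall z, compact (D z)) /\
  closed [set zv : E * E | D zv.1 zv.2] /\
  (forall gam : R -> E, abs_cont_curve gam ->
     exists N : set R, (@lebesgue_measure R).-negligible N /\
       forall t, 0 < t < 1 -> ~ N t ->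
         derivable (f \o gam) t 1 /\ derivable gam t 1 /\
         forall v, D (gam t) v -> (f \o gam)^`() t = dotp v (gam^`() t)).

End Defs.

(* Main.v *)
Require Import Defs.
From mathcomp Require Import all_boot all_order all_algebra.
From mathcomp Require Import all_classical all_reals all_analysis.
From mathcomp Require Import ring lra.
Import Order.TTheory GRing.Theory Num.Theory.
Import numFieldNormedType.Exports.
Local Open Scope ring_scope.
Local Open Scope classical_set_scope.
Set Implicit Arguments. Unset Strict Implicit. Unset Printing Implicit Defensive.

Lemma dotvE (R : realType) m (u v : 'cV[R]_m) : dotv u v = (u^T *m v) 0 0.
Proof. by rewrite /dotv mxE; apply: eq_bigr => i _; rewrite mxE. Qed.

Lemma dotvC (R : realType) m (u v : 'cV[R]_m) : dotv u v = dotv v u.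
Proof. by rewrite /dotv; apply: eq_bigr => i _; rewrite mulrC. Qed.

Lemma dotvDr (R : realType) m (u v w : 'cV[R]_m) : dotv u (v + w) = dotv u v + dotv u w.
Proof. by rewrite /dotv -big_split; apply: eq_bigr => i _; rewrite mxE mulrDr. Qed.

Lemma dotvZr (R : realType) m (u v : 'cV[R]_m) c : dotv u (c *: v) = c * dotv u v.
Proof. by rewrite /dotv mulr_sumr; apply: eq_bigr => i _; rewrite mxE mulrCA. Qed.

Lemma dotvNr (R : realType) m (u v : 'cV[R]_m) : dotv u (- v) = - dotv u v.
Proof. by rewrite -scaleN1r dotvZr mulN1r. Qed.

Lemma dotvDl (R : realType) m (u v w : 'cV[R]_m) : dotv (v + w) u = dotv v u + dotv w u.
Proof. by rewrite dotvC dotvDr !(dotvC u). Qed.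

Lemma dotvZl (R : realType) m (u v : 'cV[R]_m) c : dotv (c *: v) u = c * dotv v u.
Proof. by rewrite dotvC dotvZr dotvC. Qed.

Lemma dotvNl (R : realType) m (u v : 'cV[R]_m) : dotv (- v) u = - dotv v u.
Proof. by rewrite dotvC dotvNr dotvC. Qed.

Lemma dotv_mul (R : realType) k m (a : 'cV[R]_k) (M : 'M[R]_(k, m)) (u : 'cV[R]_m) :
  dotv a (M *m u) = dotv (M^T *m a) u.
Proof. by rewrite !dotvE trmx_mul trmxK mulmxA. Qed.

Lemma dotv_ge0 (R : realType) m (u : 'cV[R]_m) : 0 <= dotv u u.
Proof. by apply: sumr_ge0 => i _; rewrite -expr2 sqr_ge0. Qed.

Lemma dotv0 (R : realType) m (a b : 'cV[R]_m) : dotv a a = 0 -> dotv a b = 0.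
Proof.
move=> /eqP; rewrite psumr_eq0 => [/allP H|i _]; last by rewrite -expr2 sqr_ge0.
apply: big1 => i _.
have /H : i \in index_enum 'I_m by rewrite mem_index_enum.
by rewrite /= mulf_eq0 orbb => /eqP ->; rewrite mul0r.
Qed.

Lemma enorm_ge0 (R : realType) m (u : 'cV[R]_m) : 0 <= enorm u.
Proof. exact: sqrtr_ge0. Qed.

Lemma enorm_sqr (R : realType) m (u : 'cV[R]_m) : enorm u ^+ 2 = dotv u u.
Proof. by rewrite sqr_sqrtr // dotv_ge0. Qed.

Lemma dotv_young (R : realType) m (a b : 'cV[R]_m) t : 0 < t ->
  2 * dotv a b <= t * dotv a a + t^-1 * dotv b b.
Proof.
move=> t0; rewrite /dotv !mulr_sumr -big_split /=; apply: ler_sum => i _.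
have H : t * (a i 0 * a i 0) + t^-1 * (b i 0 * b i 0) - 2 * (a i 0 * b i 0)
   = t^-1 * (t * a i 0 - b i 0) ^+ 2.
  by field; rewrite gt_eqF.
rewrite -subr_ge0 H; apply: mulr_ge0; [by rewrite invr_ge0 ltW|exact: sqr_ge0].
Qed.

Lemma CS (R : realType) m (a b : 'cV[R]_m) : dotv a b <= enorm a * enorm b.
Proof.
have [A0|A0] := eqVneq (enorm a) 0.
  rewrite (@dotv0 _ _ a b) ?A0 ?mul0r // -enorm_sqr A0; by rewrite expr0n.
have [B0|B0] := eqVneq (enorm b) 0.
  rewrite dotvC (@dotv0 _ _ b a) ?B0 ?mulr0 // -enorm_sqr B0; by rewrite expr0n.
have Ap : 0 < enorm a by rewrite lt_def A0 enorm_ge0.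
have Bp : 0 < enorm b by rewrite lt_def B0 enorm_ge0.
have := dotv_young a b (divr_gt0 Bp Ap).
rewrite -!enorm_sqr invf_div.
have -> : enorm b / enorm a * enorm a ^+ 2 + enorm a / enorm b * enorm b ^+ 2
   = 2 * (enorm a * enorm b) by field; rewrite ?A0 ?B0.
by rewrite ler_pM2l.
Qed.

Lemma enormZ (R : realType) m (u : 'cV[R]_m) c : enorm (c *: u) = `|c| * enorm u.
Proof.
by rewrite /enorm dotvZr dotvZl mulrA -expr2 sqrtrM ?sqr_ge0 // sqrtr_sqr.
Qed.

Lemma enormN (R : realType) m (u : 'cV[R]_m) : enorm (- u) = enorm u.
Proof. by rewrite -scaleN1r enormZ normrN normr1 mul1r. Qed.

Lemma CSabs (R : realType) m (a b : 'cV[R]_m) : `|dotv a b| <= enorm a * enorm b.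
Proof.
rewrite ler_norml CS andbT lerNl -dotvNr.
by apply: (le_trans (CS _ _)); rewrite enormN.
Qed.

Lemma enorm0 (R : realType) m : enorm (0 : 'cV[R]_m) = 0.
Proof. by rewrite -(scale0r (0 : 'cV[R]_m)) enormZ normr0 mul0r. Qed.

Lemma enorm_eq0 (R : realType) m (u : 'cV[R]_m) : enorm u = 0 -> u = 0.
Proof.
move=> H; have H2 : dotv u u = 0 by rewrite -enorm_sqr H expr0n.
apply/matrixP => i j; rewrite mxE (ord1 j).
have := @dotv0 _ _ u (delta_mx i 0) H2.
rewrite /dotv (bigD1 i) //= big1 ?addr0.
  by rewrite mxE !eqxx mulr1.
by move=> k /negbTE ki; rewrite mxE ki mulr0.
Qed.

Lemma dotp_ge0 (R : realType) n p (w : 'cV[R]_n * 'cV[R]_p) : 0 <= dotp w w.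
Proof. by rewrite /dotp addr_ge0 ?dotv_ge0. Qed.

Lemma enormp_ge0 (R : realType) n p (w : 'cV[R]_n * 'cV[R]_p) : 0 <= enormp w.
Proof. exact: sqrtr_ge0. Qed.

Lemma enormp_sqr (R : realType) n p (w : 'cV[R]_n * 'cV[R]_p) :
  enormp w ^+ 2 = enorm w.1 ^+ 2 + enorm w.2 ^+ 2.
Proof. by rewrite sqr_sqrtr ?dotp_ge0 // !enorm_sqr. Qed.

Lemma enorm2_le (R : realType) n p (w : 'cV[R]_n * 'cV[R]_p) : enorm w.2 <= enormp w.
Proof. by rewrite /enormp /enorm ler_sqrt ?dotp_ge0 // /dotp lerDr dotv_ge0. Qed.

Lemma enorm1_le (R : realType) n p (w : 'cV[R]_n * 'cV[R]_p) : enorm w.1 <= enormp w.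
Proof. by rewrite /enormp /enorm ler_sqrt ?dotp_ge0 // /dotp lerDl dotv_ge0. Qed.

Lemma enormpZ (R : realType) n p (w : 'cV[R]_n * 'cV[R]_p) (h : R) :
  enormp (h *: w) = `|h| * enormp w.
Proof.
rewrite /enormp /dotp /=.
rewrite !dotvZr !dotvZl !mulrA -mulrDr -expr2 sqrtrM ?sqr_ge0 // sqrtr_sqr.
by [].
Qed.

Lemma enormp_x0 (R : realType) n p (a : 'cV[R]_n) : enormp (a, (0 : 'cV[R]_p)) = enorm a.
Proof. by rewrite /enormp /dotp /= (@dotv0 _ _ 0) ?addr0 // /dotv big1 // => i _; rewrite mxE mul0r. Qed.

Lemma enormp_0y (R : realType) n p (a : 'cV[R]_p) : enormp ((0 : 'cV[R]_n), a) = enorm a.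
Proof. by rewrite /enormp /dotp /= (@dotv0 _ _ 0) ?add0r // /dotv big1 // => i _; rewrite mxE mul0r. Qed.

Lemma opnorm_ub (R : realType) k m (M : 'M[R]_(k, m)) (u : 'cV[R]_m) :
  enorm (M *m u) <= opnorm M * enorm u.
Proof.
pose r (i : 'I_k) : 'cV[R]_m := (row i M)^T.
have Mv v i : (M *m v) i 0 = dotv (r i) v.
  by rewrite mxE /dotv; apply: eq_bigr => j _; rewrite !mxE.
have hub : has_ubound [set enorm (M *m v) | v in [set v : 'cV[R]_m | enorm v <= 1]].
  exists (Num.sqrt (\sum_i dotv (r i) (r i))) => _ [v /= hv <-].
  rewrite /enorm ler_sqrt; last by apply: sumr_ge0 => i _; exact: dotv_ge0.
  rewrite [X in X <= _]/dotv; apply: ler_sum => i _; rewrite Mv -expr2 -(enorm_sqr (r i)) -real_normK ?num_real //.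
  rewrite lerXn2r ?nnegrE ?normr_ge0 ?enorm_ge0 //.
  apply: (le_trans (CSabs _ _)); rewrite -[X in _ <= X]mulr1 ler_wpM2l ?enorm_ge0 //.
have [u0|u0] := eqVneq (enorm u) 0.
  by rewrite u0 (enorm_eq0 u0) mulmx0 enorm0 mulr0.
have up : 0 < enorm u by rewrite lt_def u0 enorm_ge0.
have := ub_le_sup hub; set s := sup _ => hs.
have : enorm (M *m ((enorm u)^-1 *: u)) <= s.
  apply: hs; exists ((enorm u)^-1 *: u) => //=.
  by rewrite enormZ ger0_norm ?invr_ge0 ?enorm_ge0 // mulVf.
rewrite -scalemxAr enormZ ger0_norm ?invr_ge0 ?enorm_ge0 //.
by rewrite mulrC -ler_pdivlMr ?invr_gt0 // invrK.
Qed.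
Lemma D_le (R : realType) (V W : normedModType R) (F : V -> W) (z v : V)
  (phi : W -> R) C :
  derivable F z v -> continuous phi ->
  (forall h : R, h != 0 -> phi (h^-1 *: (F (h *: v + z) - F z)) <= C) ->
  phi ('D_v F z) <= C.
Proof.
move=> dF cphi hb.
have cl : closed (phi @^-1` [set x | x <= C]).
  by apply: preimage_closed; [move=> x _; exact: cphi | exact: closed_le].
apply: (@closed_cvg _ _ _ (Proper_dnbhs_numFieldType (0:R)) _ _ cl); last exact: dF.
near=> h; apply: hb; near: h; exact: nbhs_dnbhs_neq.
Unshelve. all: by end_near.
Qed.

Lemma ndD (R : realType) k m (V : normedModType R) (F : V -> 'M[R]_(k,m)) z v :
  ~ derivable F z v -> 'D_v F z = 0.
Proof.
move=> nd; rewrite /derive /lim /lim_in xgetPN.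
  by apply/matrixP => i j; rewrite !mxE.
by move=> l hl; apply: nd; apply: cvgP hl.
Qed.

Lemma D_le_mx (R : realType) (V : normedModType R) k m (F : V -> 'M[R]_(k,m)) (z v : V)
  (phi : 'M[R]_(k,m) -> R) C :
  continuous phi -> phi 0 <= C ->
  (forall h : R, h != 0 -> phi (h^-1 *: (F (h *: v + z) - F z)) <= C) ->
  phi ('D_v F z) <= C.
Proof.
move=> cphi p0 hb; have [dF|nd] := pselect (derivable F z v).
  exact: D_le.
by rewrite ndD.
Qed.

Lemma sum_mx_cont (R : realType) k m (a : 'I_k -> R) (u : 'I_m -> R) :
  continuous (fun M : 'M[R]_(k, m) => \sum_(i < k) (a i * \sum_(j < m) (M i j * u j))).
Proof.
move=> M0.
have := @continuous_big R _ +%R 0 xpredT (add_continuous : continuous (fun z : R * R => z.1 + z.2)).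
move=> /(_ _ 'M[R]_(k, m) (index_enum 'I_k) (fun i (M : 'M[R]_(k, m)) => a i * \sum_(j < m) (M i j * u j))).
apply => i _ M.
apply: (@continuous_comp _ _ _ (fun M : 'M[R]_(k, m) => \sum_(j < m) (M i j * u j)) ( *%R (a i)) M); last exact: mulrl_continuous.
have := @continuous_big R _ +%R 0 xpredT (add_continuous : continuous (fun z : R * R => z.1 + z.2)).
move=> /(_ _ 'M[R]_(k, m) (index_enum 'I_m) (fun j (M : 'M[R]_(k, m)) => M i j * u j)).
apply => j _ M'.
apply: (@continuousM R _ (fun M1 : 'M[R]_(k, m) => M1 i j) (fun _ => u j)); [apply: (@coord_continuous R k m i j M') | exact: cst_continuous].
Qed.

Lemma dotv_mx_cont (R : realType) k m (a : 'cV[R]_k) (u : 'cV[R]_m) :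
  continuous (fun M : 'M[R]_(k, m) => dotv a (M *m u)).
Proof.
have -> : (fun M : 'M[R]_(k, m) => dotv a (M *m u)) =
   (fun M => \sum_(i < k) (a i 0 * \sum_(j < m) (M i j * u j 0))).
  by apply: funext => M; rewrite /dotv; apply: eq_bigr => i _; rewrite mxE.
exact: (@sum_mx_cont R k m (fun i => a i 0) (fun j => u j 0)).
Qed.

Lemma dotv0r (R : realType) m (a : 'cV[R]_m) : dotv a 0 = 0.
Proof. by rewrite -(scale0r (0 : 'cV[R]_m)) dotvZr mul0r. Qed.

Lemma Dmx_bound1 (R : realType) n p k m (F : 'cV[R]_n * 'cV[R]_p -> 'M[R]_(k,m))
  (Q : R) z (v : 'cV[R]_p) (a : 'cV[R]_k) (u : 'cV[R]_m) :
  0 <= Q -> (forall z1 z2, opnorm (F z1 - F z2) <= Q * enormp (z1 - z2)) ->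
  dotv a ('D_((0 : 'cV[R]_n), v) F z *m u) <= Q * enorm v * (enorm a * enorm u).
Proof.
move=> Q0 HL.
have C0 : 0 <= Q * enorm v * (enorm a * enorm u).
  by rewrite !mulr_ge0 ?enorm_ge0.
apply: (D_le_mx (phi := fun M => dotv a (M *m u))).
- exact: dotv_mx_cont.
- by rewrite mul0mx dotv0r.
move=> h h0.
set D := F _ - F z.
rewrite -scalemxAl dotvZr; apply: (le_trans (ler_norm _)).
rewrite normrM normfV ler_pdivrMl ?normr_gt0 //.
have Ho : opnorm D <= Q * (`|h| * enorm v).
  by have := HL (h *: ((0 : 'cV[R]_n), v) + z) z; rewrite addrK enormpZ enormp_0y.
apply: (le_trans (CSabs _ _)).
apply: (le_trans (ler_wpM2l (enorm_ge0 a) (opnorm_ub D u))).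
have au : 0 <= enorm a * enorm u by rewrite mulr_ge0 ?enorm_ge0.
have := normr_ge0 h; have := enorm_ge0 v; have := opnorm_ub D u.
nra.
Qed.

Lemma Dmx_bound (R : realType) n p k m (F : 'cV[R]_n * 'cV[R]_p -> 'M[R]_(k,m))
  (Q : R) z (v : 'cV[R]_p) (a : 'cV[R]_k) (u : 'cV[R]_m) :
  0 <= Q -> (forall z1 z2, opnorm (F z1 - F z2) <= Q * enormp (z1 - z2)) ->
  `|dotv a ('D_((0 : 'cV[R]_n), v) F z *m u)| <= Q * enorm v * (enorm a * enorm u).
Proof.
move=> Q0 HL; rewrite ler_norml; apply/andP; split; last exact: Dmx_bound1.
rewrite lerNl -dotvNl -(enormN a); exact: Dmx_bound1.
Qed.
Lemma D_lin (R : realType) (V W : normedModType R) (F : V -> W) (L : W -> R) z v :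
  derivable F z v -> continuous L ->
  (forall (c : R) x y, L (c *: (x - y)) = c * (L x - L y)) ->
  'D_v (L \o F) z = L ('D_v F z).
Proof.
move=> dF cL hL; rewrite {1}/derive; apply: cvg_lim => //.
have -> : (fun h : R => h^-1 *: ((L \o F \o shift z) (h *: v) - (L \o F) z)) =
    L \o (fun h : R => h^-1 *: ((F \o shift z) (h *: v) - F z)).
  by apply: funext => h /=; rewrite hL.
exact: (cvg_comp _ _ dF (cL _)).
Qed.

Lemma snd_entry_cont (R : realType) n p (j : 'I_p) :
  continuous (fun e : 'cV[R]_n * 'cV[R]_p => e.2 j 0).
Proof.
move=> e.
apply: (@continuous_comp _ _ _ snd (fun M : 'cV[R]_p => M j 0)).
  exact: cvg_snd.
exact: coord_continuous.
Qed.

Lemma sum_snd (R : realType) n p (I : finType) (x : I -> 'cV[R]_n * 'cV[R]_p) :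
  (\sum_i x i).2 = \sum_i (x i).2.
Proof. by apply: (big_morph snd (id1 := 0) (op1 := +%R)). Qed.

Lemma sum_fst (R : realType) n p (I : finType) (x : I -> 'cV[R]_n * 'cV[R]_p) :
  (\sum_i x i).1 = \sum_i (x i).1.
Proof. by apply: (big_morph fst (id1 := 0) (op1 := +%R)). Qed.

Lemma hessxy_link (R : realType) n p (g : 'cV[R]_n * 'cV[R]_p -> R) z (a : 'cV[R]_n) :
  differentiable (grad g) z ->
  (hessxy g z)^T *m a = ('D_(a, (0 : 'cV[R]_p)) (grad g) z).2.
Proof.
move=> dg.
have Dlin : 'D_(a, (0 : 'cV[R]_p)) (grad g) z =
    \sum_i a i 0 *: 'D_((delta_mx i 0 : 'cV[R]_n), (0 : 'cV[R]_p)) (grad g) z.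
  have -> : (a, (0 : 'cV[R]_p)) =
      \sum_i a i 0 *: ((delta_mx i 0 : 'cV[R]_n), (0 : 'cV[R]_p)).
    apply: injective_projections => /=.
      rewrite sum_fst /= {1}(matrix_sum_delta a).
      by apply: eq_bigr => i _; rewrite big_ord1.
    by rewrite sum_snd /= big1 // => i _; rewrite scaler0.
  rewrite deriveE // linear_sum; apply: eq_bigr => i _.
  by rewrite linearZ deriveE.
apply/matrixP => j k; rewrite (ord1 k) Dlin sum_snd summxE mxE.
apply: eq_bigr => i _; rewrite !mxE /= mulrC; congr (_ * _).

have -> : (fun z' => grady g z' j 0) = (fun e : 'cV[R]_n * 'cV[R]_p => e.2 j 0) \o grad g by [].
rewrite D_lin //; first exact: diff_derivable.
  exact: snd_entry_cont.
by move=> c x y; rewrite /= !mxE mulrBr.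
Qed.

Lemma dotv_snd_cont (R : realType) n p (G : 'cV[R]_p) :
  continuous (fun e : 'cV[R]_n * 'cV[R]_p => dotv G e.2).
Proof.
move=> e0; rewrite /dotv.
have := @continuous_big R _ +%R 0 xpredT (add_continuous : continuous (fun z : R * R => z.1 + z.2)).
move=> /(_ _ ('cV[R]_n * 'cV[R]_p)%type (index_enum 'I_p) (fun i (e : 'cV[R]_n * 'cV[R]_p) => G i 0 * e.2 i 0)).
apply => i _ e.
apply: (@continuousM R _ (fun _ => G i 0) (fun e : 'cV[R]_n * 'cV[R]_p => e.2 i 0)).
  exact: cst_continuous.
exact: snd_entry_cont.
Qed.

Lemma grad_bound1 (R : realType) n p (g : 'cV[R]_n * 'cV[R]_p -> R) z (a : 'cV[R]_n)
  (G : 'cV[R]_p) Lg :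
  differentiable (grad g) z -> 0 <= Lg ->
  (forall z1 z2, enormp (grad g z1 - grad g z2) <= Lg * enormp (z1 - z2)) ->
  dotv G ('D_(a, (0 : 'cV[R]_p)) (grad g) z).2 <= Lg * enorm a * enorm G.
Proof.
move=> dg L0 HL.
apply: (D_le (phi := fun e : 'cV[R]_n * 'cV[R]_p => dotv G e.2)).
- exact: diff_derivable.
- exact: dotv_snd_cont.
move=> h h0.
set D := grad g _ - grad g z.
have -> : (h^-1 *: D).2 = h^-1 *: D.2 by [].
rewrite dotvZr; apply: (le_trans (ler_norm _)).
rewrite normrM normfV ler_pdivrMl ?normr_gt0 //.
have Ho : enormp D <= Lg * (`|h| * enorm a).
  by have := HL (h *: (a, (0 : 'cV[R]_p)) + z) z; rewrite addrK enormpZ enormp_x0.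
apply: (le_trans (CSabs _ _)).
have := enorm2_le D; have := enorm_ge0 G; have := enorm_ge0 a; have := normr_ge0 h.
nra.
Qed.

Lemma grad_bound (R : realType) n p (g : 'cV[R]_n * 'cV[R]_p -> R) z (a : 'cV[R]_n)
  (G : 'cV[R]_p) Lg :
  (forall z, differentiable (grad g) z) -> 0 <= Lg ->
  (forall z1 z2, enormp (grad g z1 - grad g z2) <= Lg * enormp (z1 - z2)) ->
  `|dotv a (hessxy g z *m G)| <= Lg * enorm a * enorm G.
Proof.
move=> dg L0 HL.
rewrite dotv_mul dotvC hessxy_link //.
rewrite ler_norml; apply/andP; split; last exact: grad_bound1.
rewrite lerNl -dotvNl -(enormN G); exact: grad_bound1.
Qed.

Lemma H_unit (R : realType) p (H : 'M[R]_p) mu : 0 < mu ->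
  (forall v, mu * dotv v v <= dotv v (H *m v)) -> H \in unitmx.
Proof.
move=> mu0 Hc; rewrite unitmxE unitfE; apply/negP => /det0P [v v0 vH].
have := Hc v^T; rewrite [X in _ <= X]dotvE trmxK mulmxA vH mul0mx mxE.
rewrite pmulr_rle0 // => h.
have h0 : dotv v^T v^T = 0 by apply/eqP; rewrite eq_le h dotv_ge0.
have : enorm v^T = 0 by rewrite /enorm h0 sqrtr0.
move=> /enorm_eq0 /(congr1 trmx); rewrite trmxK trmx0 => v0'.
by move: v0; rewrite v0' eqxx.
Qed.

Lemma Hinv_bound (R : realType) p (H : 'M[R]_p) mu (u : 'cV[R]_p) : 0 < mu ->
  (forall v, mu * dotv v v <= dotv v (H *m v)) ->
  enorm (invmx H *m u) <= enorm u / mu.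
Proof.
move=> mu0 Hc; have uH := H_unit mu0 Hc.
set w := invmx H *m u.
have Hw : H *m w = u by rewrite /w mulKVmx.
have := Hc w; rewrite Hw -enorm_sqr => h.
have := CS w u; have := enorm_ge0 w; have := enorm_ge0 u.
rewrite ler_pdivlMr //.
move=> u0 w0 cs.
have [->|wp] := eqVneq (enorm w) 0; first by rewrite mul0r.
have wp' : 0 < enorm w by rewrite lt_def wp w0.
have : enorm w * (enorm w * mu) <= enorm w * enorm u by nra.
by rewrite ler_pM2l.
Qed.
Lemma final_ineq (R : realType) (A Gn mu Qg Mf Lg beta bh t2 t3 t4 t5 : R) :
 0 <= A -> 0 <= Gn -> 0 < mu -> 0 < Qg -> 0 < Mf -> 0 < Lg ->
 4 * Qg * Mf / mu ^+ 3 <= beta ->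
 beta * Num.max (8 * Lg ^+ 2 / mu) (Num.max (1 / (4 * mu)) (mu / 4)) <= bh ->
 - (Qg * Mf / mu ^+ 2 * (A * Gn)) <= t2 ->
 - (Lg * A * Gn) <= t3 ->
 - (Qg * Mf / mu ^+ 2 * (Gn * Gn)) <= t4 ->
 mu * Gn ^+ 2 <= t5 ->
 Num.min (1 / 4) (beta ^+ 2 / (16 * bh ^+ 2)) * (A ^+ 2 + bh ^+ 2 * Gn ^+ 2)
   <= A ^+ 2 + t2 + beta * t3 + bh * t4 + bh * beta * t5.
Proof.
move=> A0 G0 mu0 Q0 M0 L0 hb hbh h2 h3 h4 h5.
set K := Qg * Mf / mu ^+ 2.
have Kp : 0 < K by rewrite /K !mulr_gt0 ?invr_gt0 ?exprn_gt0.
have bp : 0 < beta.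
  by apply: lt_le_trans hb; rewrite !mulr_gt0 ?invr_gt0 ?exprn_gt0.
have hK : K <= beta * mu / 4.
  have -> : K = 4 * Qg * Mf / mu ^+ 3 * mu / 4 by rewrite /K; field; rewrite gt_eqF.
  by rewrite ler_pM2r ?invr_gt0 // ler_pM2r.
have e1 : beta * (8 * Lg ^+ 2 / mu) <= bh.
  by apply: le_trans hbh; rewrite ler_pM2l // le_max lexx.
have e2 : beta * (1 / (4 * mu)) <= bh.
  by apply: le_trans hbh; rewrite ler_pM2l // !le_max lexx orbT.
have e3 : beta * (mu / 4) <= bh.
  by apply: le_trans hbh; rewrite ler_pM2l // !le_max lexx !orbT.
have bhp : 0 < bh by apply: lt_le_trans e3; rewrite !mulr_gt0.
have f1 : 8 * beta * Lg ^+ 2 <= bh * mu.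
  have E : beta * (8 * Lg ^+ 2 / mu) * mu = 8 * beta * Lg ^+ 2 by field; rewrite gt_eqF.
  by rewrite -E ler_pM2r.
have f2 : beta <= 4 * bh * mu.
  have E : beta * (1 / (4 * mu)) * (4 * mu) = beta by field; rewrite gt_eqF.
  rewrite -[X in X <= _]E (_ : 4 * bh * mu = bh * (4 * mu)); last by ring.
  by rewrite ler_pM2r ?mulr_gt0.
have f3 : beta * mu <= 4 * bh.
  have E : beta * (mu / 4) * 4 = beta * mu by field.
  by rewrite -E [4 * bh]mulrC ler_pM2r.
set c := Num.min _ _.
have c1 : c <= 1 / 4 by rewrite /c ge_min lexx.
have c2 : c * bh ^+ 2 <= beta ^+ 2 / 16.
  have : c <= beta ^+ 2 / (16 * bh ^+ 2) by rewrite /c ge_min lexx orbT.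
  rewrite -(ler_pM2r (exprn_gt0 2 bhp)) => h; apply: le_trans h _.
  have E : beta ^+ 2 / (16 * bh ^+ 2) * bh ^+ 2 = beta ^+ 2 / 16 by field; rewrite gt_eqF.
  by rewrite E.
have c0 : 0 <= c.
  rewrite /c le_min; apply/andP; split; first by [].
  by rewrite mulr_ge0 ?invr_ge0 ?sqr_ge0 // mulr_ge0 // sqr_ge0.
have s1 : c * (A ^+ 2 + bh ^+ 2 * Gn ^+ 2) <= A ^+ 2 / 4 + beta ^+ 2 / 16 * Gn ^+ 2.
  rewrite mulrDr mulrA; apply: lerD.
    have := sqr_ge0 A; nra.
  have := sqr_ge0 Gn; nra.
apply: (le_trans s1).
have AG : 0 <= A * Gn by rewrite mulr_ge0.
have g2 : - (beta * mu / 4 * (A * Gn)) <= t2.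
  apply: le_trans h2; rewrite lerN2; exact: ler_wpM2r.
have g3 : - (beta * (Lg * A * Gn)) <= beta * t3.
  by rewrite -mulrN ler_pM2l.
have g4 : - (bh * (beta * mu / 4 * (Gn * Gn))) <= bh * t4.
  rewrite -mulrN ler_pM2l //; apply: le_trans h4; rewrite lerN2.
  by move: (ler_wpM2r (mulr_ge0 G0 G0) hK); rewrite /K.
have g5 : bh * beta * (mu * Gn ^+ 2) <= bh * beta * t5.
  by rewrite ler_pM2l ?mulr_gt0.
set B := beta * (mu / 4 + Lg).
have q1 : B * (A * Gn) <= A ^+ 2 / 2 + B ^+ 2 / 2 * Gn ^+ 2.
  have := sqr_ge0 (A - B * Gn); nra.
have q2 : B ^+ 2 <= 2 * beta ^+ 2 * (mu ^+ 2 / 16 + Lg ^+ 2).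
  rewrite /B; have := sqr_ge0 (mu / 4 - Lg); have := sqr_ge0 beta; nra.
have q3 : beta ^+ 2 / 16 + beta ^+ 2 * (mu ^+ 2 / 16 + Lg ^+ 2) <= 3 / 4 * bh * beta * mu.
  nra.
have G2 : 0 <= Gn ^+ 2 by rewrite sqr_ge0.
have q4 : B ^+ 2 / 2 * Gn ^+ 2 <= beta ^+ 2 * (mu ^+ 2 / 16 + Lg ^+ 2) * Gn ^+ 2.
  apply: ler_wpM2r => //; lra.
have q5 : beta ^+ 2 / 16 * Gn ^+ 2 + beta ^+ 2 * (mu ^+ 2 / 16 + Lg ^+ 2) * Gn ^+ 2
   <= 3 / 4 * bh * beta * mu * Gn ^+ 2.
  rewrite -mulrDl; exact: ler_wpM2r.
rewrite /B in q1 q4.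
have E5 : bh * beta * (mu * Gn ^+ 2) = bh * beta * mu * Gn ^+ 2 by ring.
rewrite E5 in g5.
nra.
Qed.

Unset Implicit Arguments. Set Strict Implicit.

Theorem proposition4p6 (R : realType) (n p : nat)
  (f g : 'cV[R]_n * 'cV[R]_p -> R)
  (Df : 'cV[R]_n * 'cV[R]_p -> set ('cV[R]_n * 'cV[R]_p))
  (Mf mu Lg Qg beta betahat : R) :
  0 < Mf -> 0 < mu -> 0 < Lg -> 0 < Qg ->
  (* (A1) *)
  (forall z1 z2, `|f z1 - f z2| <= Mf * enormp (z1 - z2)) ->
  (forall z, differentiable g z) ->
  (forall z, differentiable (grad g) z) ->
  (forall z (v : 'cV[R]_p), mu * dotv v v <= dotv v (hessyy g z *m v)) ->
  (forall z1 z2, enormp (grad g z1 - grad g z2) <= Lg * enormp (z1 - z2)) ->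
  (forall z1 z2, opnorm (hessyy g z1 - hessyy g z2) <= Qg * enormp (z1 - z2)) ->
  (forall z1 z2, opnorm (hessxy g z1 - hessxy g z2) <= Qg * enormp (z1 - z2)) ->
  (forall z, differentiable (hessyy g) z) ->
  (forall v, continuous (fun z => 'D_v (hessyy g) z)) ->
  (* (A2) *)
  conservative_potential Df f ->
  (forall z, forall u v, Df z u -> Df z v -> forall t : R, 0 <= t <= 1 ->
     Df z (t *: u + (1 - t) *: v)) ->
  (forall z v, Df z v -> enormp v <= Mf) ->
  (* parameters *)
  4 * Qg * Mf / mu ^+ 3 <= beta ->
  beta * Num.max (8 * Lg ^+ 2 / mu) (Num.max (1 / (4 * mu)) (mu / 4)) <= betahat ->
  forall (x : 'cV[R]_n) (y : 'cV[R]_p) (w : 'cV[R]_n * 'cV[R]_p),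
    Dshat g Df betahat x y w ->
    sup [set dotp w z | z in Dh g Df beta x y]
      >= Num.min (1 / 4) (beta ^+ 2 / (16 * betahat ^+ 2)) * enormp w ^+ 2.
Proof.
move=> Mf0 mu0 L0 Q0 _ _ gradd coerc gL hyyL hxyL _ _ _ _ Dbd hb hbh x y w [d dD <-].
set z0 := (x, y).
set H := hessyy g z0.
set Hxy := hessxy g z0.
set G := grady g z0.
set Hi := invmx H.
set a := d.1 - Hxy *m Hi *m d.2.
set S := [set dotp _ z | z in Dh g Df beta x y].
set zd := (d.1 + JAx g x y *m d.2 + beta *: (Hxy *m G),
           JAy g x y *m d.2 + beta *: (H *m G)).
have zdS : S (dotp (a, betahat *: G) zd) by exists zd => //; exists d.
have hub : has_ubound S.
  exists ((enorm a + enorm ((JAx g x y)^T *m a) + enorm ((JAy g x y)^T *m (betahat *: G))) * Mf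
          + dotv a (beta *: (Hxy *m G)) + dotv (betahat *: G) (beta *: (H *m G))).
  move=> _ [_ [d' d'D <-] <-].
  rewrite /dotp /= !dotvDr !dotv_mul.
  have h1 := enorm1_le d'; have h2 := enorm2_le d'; have hd := Dbd _ _ d'D.
  have c1 := CS a d'.1.
  have c2 := CS ((JAx g x y)^T *m a) d'.2.
  have c3 := CS ((JAy g x y)^T *m (betahat *: G)) d'.2.
  have := enorm_ge0 a; have := enorm_ge0 ((JAx g x y)^T *m a);
  have := enorm_ge0 ((JAy g x y)^T *m (betahat *: G)).
  nra.
apply: le_trans _ (ub_le_sup hub zdS).
set u := Hi *m d.2.
set v := Hi *m G.
set D3x := d3xyy g z0 v.
set D3y := d3yyy g z0 v.
have E1 : zd.1 = a + D3x *m u + beta *: (Hxy *m G).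
  rewrite /zd /a /JAx /= mulmxDl mulNmx /u !mulmxA.
  by rewrite addrA.
have E2 : zd.2 = D3y *m u + beta *: (H *m G).
  by rewrite /zd /JAy /= /u !mulmxA.
have Edot : dotp (a, betahat *: G) zd =
   enorm a ^+ 2 + dotv a (D3x *m u) + beta * dotv a (Hxy *m G)
   + betahat * dotv G (D3y *m u) + betahat * beta * dotv G (H *m G).
  rewrite /dotp E1 E2 /= !dotvDr !dotvZr !dotvZl enorm_sqr.
  rewrite -[dotv a d.1 + _]dotvDr -/a; ring.
have En : enormp (a, betahat *: G) ^+ 2 = enorm a ^+ 2 + betahat ^+ 2 * enorm G ^+ 2.
  by rewrite enormp_sqr /= enormZ exprMn real_normK ?num_real.
rewrite Edot En.
have ev : enorm v <= enorm G / mu. exact: (Hinv_bound _ mu0 (coerc z0)).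
have eu : enorm u <= Mf / mu.
  apply: (le_trans (Hinv_bound _ mu0 (coerc z0))).
  by rewrite ler_pM2r ?invr_gt0 //; apply: le_trans (enorm2_le d) (Dbd _ _ dD).
have A0 := enorm_ge0 a; have G0 := enorm_ge0 G.
have v0 := enorm_ge0 v; have u0 := enorm_ge0 u.
apply: (final_ineq (mu := mu) (Qg := Qg) (Mf := Mf) (Lg := Lg) A0 G0 mu0 Q0 Mf0 L0 hb hbh).
- have := Dmx_bound z0 v a u (ltW Q0) hxyL.
  rewrite ler_norml => /andP [h _]; apply: le_trans _ h; rewrite lerN2.
  have -> : Qg * Mf / mu ^+ 2 * (enorm a * enorm G) =
     Qg * (enorm G / mu) * (enorm a * (Mf / mu)) by field; rewrite gt_eqF.
  apply: ler_pM.
  + exact: mulr_ge0 (ltW Q0) v0.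
  + by apply: mulr_ge0.
  + by rewrite ler_pM2l.
  + exact: ler_wpM2l.
- have := grad_bound z0 a G gradd (ltW L0) gL.
  by rewrite ler_norml => /andP [h _].
- have := Dmx_bound z0 v G u (ltW Q0) hyyL.
  rewrite ler_norml => /andP [h _]; apply: le_trans _ h; rewrite lerN2.
  have -> : Qg * Mf / mu ^+ 2 * (enorm G * enorm G) =
     Qg * (enorm G / mu) * (enorm G * (Mf / mu)) by field; rewrite gt_eqF.
  apply: ler_pM.
  + exact: mulr_ge0 (ltW Q0) v0.
  + by apply: mulr_ge0.
  + by rewrite ler_pM2l.
  + exact: ler_wpM2l.
- by rewrite enorm_sqr; exact: coerc.
Qed.
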